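(* Let $p>2$ be a prime, $m\ge2$, and $c_1,\ldots,c_{2m}\in\mathbb{Z}_p$ with $c_i\not\equiv0\pmod p$. Let $G$ be the pro-$p$-group with generators $x_1,\ldots,x_{2m}$ and relations $$x_1^{pc_1}[x_1,x_2]=1,\ x_2^{pc_2}[x_2,x_3]=1,\ \ldots,\ x_{2m-1}^{pc_{2m-1}}[x_{2m-1},x_{2m}]=1,\ x_{2m}^{pc_{2m}}[x_{2m},x_1]=1,$$ i.e. $G=F/R$ with $F$ the free pro-$p$-group on $x_1,\dots,x_{2m}$ and $R$ the closed normal subgroup generated by the left-hand sides. Then for every $n<p$, every continuous homomorphism $G\to\mathrm{GL}_n^{(1)}(\mathbb{Z}_p)$ is trivial.
   Context: $\mathrm{GL}_n^{(1)}(\mathbb{Z}_p)=\{X\in\mathrm{GL}_n(\mathbb{Z}_p): X\equiv 1 \bmod p\}$; $[x,y]=x^{-1}y^{-1}xy$. *)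

(* Defs.v *)
From HB Require Import structures.
From mathcomp Require Import all_boot all_order all_algebra.
Set Implicit Arguments. Unset Strict Implicit. Unset Printing Implicit Defensive.
Import GRing.Theory.
Local Open Scope ring_scope.

(* p-adic integers Z_p, as the inverse limit of Z/p^(k+1), k >= 0:
   coordinate k is the residue mod p^(k+1).  (Used only for p prime > 2,
   so every 'Z_(p^(k+1)) really is Z/p^(k+1)Z.) *)
Record Zpadic (p : nat) := ZPadic {
  zp_coord : forall k : nat, 'Z_(p ^ k.+1);
  zp_compat : forall k : nat,
    ((zp_coord k.+1 : nat) %% p ^ k.+1 = (zp_coord k : nat))%N }.

(* GL_n^(1)(Z_p) = { X in GL_n(Z_p) : X = 1 mod p }, as compatible families
   of n x n matrices over Z/p^(k+1) whose reduction mod p is the identity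
   (such matrices are automatically invertible over Z_p). *)
Record GLn1 (p n : nat) := GLN1 {
  gl_coord : forall k : nat, 'M['Z_(p ^ k.+1)]_n;
  gl_compat : forall (k : nat) (i j : 'I_n),
    ((gl_coord k.+1 i j : nat) %% p ^ k.+1 = (gl_coord k i j : nat))%N;
  gl_one_mod_p : gl_coord 0 = 1%:M }.

Definition gl_trivial (p n : nat) (X : GLn1 p n) : Prop :=
  forall k : nat, gl_coord X k = 1%:M.

Definition mxpow (R : pzRingType) (n : nat) (A : 'M[R]_n) (e : nat) : 'M[R]_n :=
  iter e (mulmx A) 1%:M.

Definition mxcomm (R : comUnitRingType) (n : nat) (A B : 'M[R]_n) : 'M[R]_n :=
  invmx A *m invmx B *m A *m B.

(* Since X = 1 mod p, X mod p^(k+1) has order dividing p^k, so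
   the p-adic power X^(p c) reduces mod p^(k+1) to (X mod p^(k+1))^(p c')
   for any natural c' = c mod p^k; we use c' = the residue of c mod p^(k+1). *)
Definition rel_holds (p n : nat) (c : Zpadic p) (X Y : GLn1 p n) : Prop :=
  forall k : nat,
    mxpow (gl_coord X k) (p * zp_coord c k)%N *m mxcomm (gl_coord X k) (gl_coord Y k)
    = 1%:M.

(* Continuous homomorphisms G -> GL_n^(1)(Z_p), where
   G = < x_0..x_(2m-1) | x_i^(p c_i) [x_i, x_(i+1 mod 2m)] = 1 > (pro-p),
   are (by the universal property of the free pro-p group, GL_n^(1)(Z_p)
   being pro-p) exactly the tuples of images of the generators satisfying
   the defining relations.  Indices are 0-based here. *)
Definition hom_G_GLn1 (p m n : nat) (c : nat -> Zpadic p) :=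
  { X : nat -> GLn1 p n |
      forall i : nat, (i < 2 * m)%N -> rel_holds (c i) (X i) (X ((i.+1 %% (2 * m))%N)) }.

(* Main.v *)
Require Import Defs.
From mathcomp Require Import all_boot all_order all_algebra.
From mathcomp Require Import ring zify.
Set Implicit Arguments. Unset Strict Implicit. Unset Printing Implicit Defensive.
Import GRing.Theory.

Module Helpers.
Local Open Scope ring_scope.


Section Field.
Variables (F : fieldType) (n' : nat).
Local Notation n := n'.+1.
Implicit Types (a b c : 'M[F]_n).

Lemma telesc (V : zmodType) (x y z : V) : x - z = (x - y) + (y - z).
Proof. by rewrite addrA subrK. Qed.

Lemma powcomm b c (mu : F) : b * c - c * b = mu *: b ->
  forall k, b ^+ k * c - c * b ^+ k = (k%:R * mu) *: b ^+ k.
Proof.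
move=> H; elim=> [|k IH]; first by rewrite expr0 mul1r mulr1 subrr mul0r scale0r.
have E : b ^+ k.+1 * c - c * b ^+ k.+1 = b * (b ^+ k * c - c * b ^+ k) + (b * c - c * b) * b ^+ k.
  by rewrite exprS mulrBr mulrBl !mulrA -telesc.
by rewrite E IH H -scalerAr -scalerAl -exprS -scalerDl mulrSr mulrDl mul1r.
Qed.

Lemma nilp b c (mu : F) :
 (forall k, (0 < k <= n)%N -> k%:R != 0 :> F) -> mu != 0 ->
 b * c - c * b = mu *: b -> b ^+ n = 0.
Proof.
move=> Hk Hmu H; have P := powcomm H.
set chi := char_poly b.
pose ff (k j : nat) : F := \prod_(i < j) (k%:R - i%:R).
pose S j := \sum_(k < n.+1) (chi`_k * ff k j * mu ^+ j) *: b ^+ k.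
have S0 : S 0%N = 0.
  rewrite /S -[RHS](Cayley_Hamilton b) -/chi -[chi in horner_mx _ chi]coefK poly_def linear_sum size_char_poly.
  apply: eq_bigr => k _; rewrite /ff big_ord0 expr0 !mulr1 linearZ /= rmorphXn /= horner_mx_X.
  by [].
have SS j : S j.+1 = S j * c - c * S j - (j%:R * mu) *: S j.
  rewrite /S mulr_suml mulr_sumr -sumrB scaler_sumr -sumrB; apply: eq_bigr => k _.
  rewrite -scalerAl -scalerAr -scalerBr P !scalerA -scalerBl; congr (_ *: _).
  rewrite /ff big_ord_recr /= exprSr; ring.
have Sn : forall j, S j = 0 by elim=> // j IH; rewrite SS IH mul0r mulr0 subrr scaler0 subrr.
have := Sn n; rewrite /S big_ord_recr /= big1 ?add0r; last first.
  move=> k _; rewrite /ff (bigD1 (Ordinal (ltn_ord k))) //= subrr mul0r mulr0 mul0r scale0r //.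
move/eqP; rewrite scaler_eq0 => /orP[|/eqP//].
have -> : chi`_n = 1 by have := char_poly_monic b; rewrite monicE /lead_coef size_char_poly => /eqP.
rewrite mul1r mulf_eq0 expf_eq0 (negbTE Hmu) andbF orbF /ff prodf_seq_eq0.
case/hasP=> i _ /=; rewrite -natrB; last by apply: ltnW.
by rewrite (negbTE (Hk _ _)) // subn_gt0 ltn_ord leq_subr.
Qed.

Lemma kill a b (lam : F) : lam != 0 -> b ^+ n = 0 -> a * b - b * a = lam *: a -> a = 0.
Proof.
move=> Hl Hb H.
have D : forall j, (j <= n)%N -> b ^+ (n - j) * a = 0.
  elim=> [_|j IH Hj]; first by rewrite subn0 Hb mul0r.
  set u := b ^+ (n - j.+1) * a.
  have Hu : u * b = lam *: u.
    have E: u * b = b ^+ (n - j.+1) * (a * b - b * a) + b ^+ (n - j.+1).+1 * a.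
      by rewrite exprSr mulrBr !mulrA subrK.
    rewrite E H -scalerAr subnSK // IH ?addr0 //; exact: ltnW.
  have Hk : forall k, u * b ^+ k = lam ^+ k *: u.
    elim=> [|k IHk]; first by rewrite mulr1 expr0 scale1r.
    by rewrite exprSr mulrA IHk -scalerAl Hu scalerA -exprSr.
  have := Hk n; rewrite Hb mulr0 => /esym/eqP; rewrite scaler_eq0 expf_eq0 (negbTE Hl) andbF /=.
  by move/eqP.
by have := D n (leqnn _); rewrite subnn expr0 mul1r.
Qed.

Lemma pair_zero a b c (eps g1 g2 : F) :
 (forall k, (0 < k <= n)%N -> k%:R != 0 :> F) -> g1 != 0 -> g2 != 0 ->
 eps *: (a * b - b * a) + g1 *: a = 0 ->
 eps *: (b * c - c * b) + g2 *: b = 0 -> a = 0.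
Proof.
move=> Hk H1 H2 Ea Eb.
have [e0|en0] := eqVneq eps 0.
  by move: Ea; rewrite e0 scale0r add0r => /eqP; rewrite scaler_eq0 (negbTE H1) => /eqP.
have lin (x y : 'M[F]_n) (g : F) : eps *: x + g *: y = 0 -> x = (- g / eps) *: y.
  move=> E; have -> : x = eps^-1 *: (eps *: x) by rewrite scalerA mulVf // scale1r.
  rewrite (_ : eps *: x = - (g *: y)); last by apply/eqP; rewrite -addr_eq0 E.
  by rewrite -scaleNr scalerA mulrC.
apply: (kill (lam := - g1 / eps)) (lin _ _ _ Ea).
  by rewrite mulf_eq0 oppr_eq0 invr_eq0 negb_or H1 en0.
apply: (nilp (c := c) (mu := - g2 / eps)) (lin _ _ _ Eb) => //.
by rewrite mulf_eq0 oppr_eq0 invr_eq0 negb_or H2 en0.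
Qed.
End Field.


Lemma mxpowE (R : pzRingType) n' (A : 'M[R]_n'.+1) K : mxpow A K = A ^+ K.
Proof. by elim: K => [|K IH] //=; rewrite /mxpow /= -/(mxpow A K) IH exprS mulmxE. Qed.

Lemma rel_poly (R : comUnitRingType) n' (X Y : 'M[R]_n'.+1) K :
  mxpow X K *m mxcomm X Y = 1%:M -> X * Y * X ^+ K = Y * X.
Proof.
rewrite mxpowE /mxcomm !mulmxE; set P := X ^+ K => E.
have E1 : (P * invmx X * invmx Y * X) * Y = 1 by rewrite !mulrA in E.
have [_ uY] := mulmx1_unit E1.
have iXE : invmx X = X^-1 by [].
have iYE : invmx Y = Y^-1 by [].
rewrite iXE iYE in E1 E *.
have E2 := mulmx1C E1; rewrite !mulmxE !mulrA in E2.
have [_ uX] := mulmx1_unit E2.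
have uX' : X \is a GRing.unit by [].
have uY' : Y \is a GRing.unit by [].
set Q := X^-1 * Y^-1 * X * Y.
have uQ : Q \is a GRing.unit by rewrite /Q !unitrMr ?unitrV.
have PQ : P = Q^-1.
  have PQ1 : P * Q = 1 := E.
  by rewrite -[P]mulr1 -(mulrV uQ) mulrA PQ1 mul1r.
rewrite PQ /Q.
by rewrite !invrM ?unitrMr ?unitrV // !invrK !mulrA mulrK // mulrV // mul1r.
Qed.


Lemma intZp (N : nat) (z : int) : (1 < N)%N -> ((z%:~R : 'Z_N) == 0) = (N%:Z %| z)%Z.
Proof.
move=> N1; case: z => m.
  have -> : ((Posz m)%:~R : 'Z_N) = m%:R by [].
  by rewrite -(inj_eq val_inj) /= val_Zp_nat // dvdzE /=.
rewrite NegzE intrN oppr_eq0 rpredN.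
have -> : ((Posz m.+1)%:~R : 'Z_N) = m.+1%:R by [].
by rewrite -(inj_eq val_inj) /= val_Zp_nat // dvdzE /=.
Qed.

Lemma val_one (N : nat) n (a b : 'I_n) : (1 < N)%N -> ((1%:M : 'M['Z_N]_n) a b : nat) = (a == b).
Proof. by move=> N1; rewrite mxE val_Zp_nat // modn_small //; case: (a == b); lia. Qed.

Lemma liftK (N : nat) n (Z : 'M['Z_N]_n) :
  map_mx (intr : int -> 'Z_N) (\matrix_(i, j) ((Z i j : nat)%:Z)) = Z.
Proof. by apply/matrixP => i j; rewrite !mxE; exact: natr_Zp. Qed.

Lemma PoszX (m k : nat) : (m ^ k)%:Z = (m%:Z) ^+ k.
Proof. by rewrite -!natz natrX. Qed.

Lemma Zp_lt (N : nat) (x : 'Z_N) : (1 < N)%N -> (x < N)%N.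
Proof. by move=> N1; apply: leq_trans (ltn_ord x) _; rewrite Zp_cast. Qed.

Lemma gl_chain p n (X : GLn1 p n) k d i j : (1 < p)%N ->
  ((gl_coord X (k + d) i j : nat) %% p ^ k.+1 = gl_coord X k i j)%N.
Proof.
move=> p1; have N1 : (1 < p ^ k.+1)%N by rewrite -(exp1n k.+1) ltn_exp2r.
elim: d => [|d IH].
  by rewrite addn0 modn_small // Zp_lt.
rewrite addnS -IH -(gl_compat X (k + d)) modn_dvdm // dvdn_exp2l //; lia.
Qed.

Lemma zp_chain p (c : Zpadic p) k d : (1 < p)%N ->
  ((zp_coord c (k + d) : nat) %% p ^ k.+1 = zp_coord c k)%N.
Proof.
move=> p1; have N1 : (1 < p ^ k.+1)%N by rewrite -(exp1n k.+1) ltn_exp2r.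
elim: d => [|d IH].
  by rewrite addn0 modn_small // Zp_lt.
rewrite addnS -IH -(zp_compat c (k + d)) modn_dvdm // dvdn_exp2l //; lia.
Qed.


Lemma powgen (R : comNzRingType) (x T : R) K : exists r : R,
  (1 + T * x) ^+ K = 1 + K%:R * T * x + ('C(K, 2))%:R * T ^+ 2 * x ^+ 2 + T ^+ 3 * r.
Proof.
elim: K => [|K IH].
  by exists 0; rewrite expr0 /= mulr0 addr0 bin0n /= !mul0r !addr0.
case: IH => r IH.
exists (r * (1 + T * x) + ('C(K, 2))%:R * x ^+ 3).
rewrite exprSr IH binS bin1 !natrD. ring.
Qed.

Section Mdiv.
Variable n' : nat.
Local Notation n := n'.+1.
Definition mdiv (d : int) (M : 'M[int]_n) := forall i j, (d %| M i j)%Z.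

Lemma mdivD d M N : mdiv d M -> mdiv d N -> mdiv d (M + N).
Proof. by move=> H1 H2 i j; rewrite mxE rpredD. Qed.
Lemma mdivN d M : mdiv d M -> mdiv d (- M).
Proof. by move=> H1 i j; rewrite mxE rpredN. Qed.
Lemma mdivB d M N : mdiv d M -> mdiv d N -> mdiv d (M - N).
Proof. by move=> H1 H2; apply: mdivD => //; apply: mdivN. Qed.
Lemma mdivMl d M N : mdiv d N -> mdiv d (M * N).
Proof. by move=> H i j; rewrite -mulmxE mxE rpred_sum // => k _; apply: dvdz_mull. Qed.
Lemma mdivMr d M N : mdiv d M -> mdiv d (M * N).
Proof. by move=> H i j; rewrite -mulmxE mxE rpred_sum // => k _; apply: dvdz_mulr. Qed.
Lemma mdivZ d k M : (d %| k)%Z -> mdiv d (k *: M).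
Proof. by move=> H i j; rewrite mxE dvdz_mulr. Qed.
Lemma mdivZr d k M : mdiv d M -> mdiv d (k *: M).
Proof. by move=> H i j; rewrite mxE dvdz_mull. Qed.
Lemma mdiv_trans d d' M : (d %| d')%Z -> mdiv d' M -> mdiv d M.
Proof. by move=> H1 H2 i j; apply: dvdz_trans H1 (H2 i j). Qed.
Lemma mdiv0 d : mdiv d 0.
Proof. by move=> i j; rewrite mxE dvdz0. Qed.

Lemma commE (R : pzRingType) (x y : R) : (1 + x) * (1 + y) - (1 + y) * (1 + x) = x * y - y * x.
Proof.
have E a b : (1 + a) * (1 + b) = (1 + a + b) + a * b.
  by rewrite mulrDl !mulrDr !mul1r ?mulr1 !addrA (addrAC 1 b a).
by rewrite !E (addrAC 1 y x) opprD addrACA subrr add0r.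
Qed.



Lemma telesc2 (V : zmodType) (x y z w : V) : x - z - w = (x - y) + (y - z - w).
Proof. by rewrite (telesc x y z) !addrA. Qed.

Lemma mdivZm d s k M : (d %| k * s)%Z -> mdiv s M -> mdiv d (k *: M).
Proof.
move=> H1 H2 i j; rewrite mxE; have /dvdzP [q ->] := H2 i j.
by rewrite mulrCA dvdz_mull.
Qed.

Lemma key_int (A B : 'M[int]_n) (p e c' : nat) : prime p -> (2 < p)%N ->
 let t := (p%:Z) ^+ e.+1 in
 mdiv ((p%:Z) ^+ e.+3) ((1 + t *: A) * (1 + t *: B) * (1 + t *: A) ^+ (p * c')
     - (1 + t *: B) * (1 + t *: A)) ->
 mdiv p%:Z (((p%:Z) ^+ e) *: (A * B - B * A) + c'%:Z *: A).
Proof.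
move=> pp p2 t H; have tE : t = (p%:Z) ^+ e.+1 by [].
clearbody t; set d := (p%:Z) ^+ e.+3 in H; set K := (p * c')%N in H.
set X := 1 + t *: A in H; set Y := 1 + t *: B in H.
have sc (k : int) M : k *: M = k%:M * M by rewrite -mul_scalar_mx mulmxE.
have pC : (p %| 'C(K, 2))%N.
  have E2 := mul_bin_diag K 1; rewrite bin1 in E2.
  rewrite -(@Gauss_dvdr p 2); last by rewrite prime_coprime //; apply/negP => /dvdn_leq; lia.
  by rewrite -E2 dvdn_mulr // /K dvdn_mulr.
have smM (a b : int) : (a * b)%:M = a%:M * b%:M :> 'M[int]_n by rewrite scalar_mxM mulmxE.
have canc (x a b c : 'M[int]_n) : x + a + b + c - (x + a) = b + c.
  by rewrite -(addrA (x + a) b c) [LHS]addrC addKr.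
have HPw : mdiv d (X ^+ K - (1 + (K%:Z * t) *: A)).
  have [r Hr] := powgen ('X : {poly int}) (t%:P) K.
  have HP := congr1 (horner_mx A) Hr.
  rewrite !(rmorphD, rmorphM, rmorphXn, rmorph1, rmorph_nat) /= horner_mx_C horner_mx_X in HP.
  rewrite /X sc HP -!(rmorph_nat (@scalar_mx int n)) -!smM -!mulmxE !mul_scalar_mx.
  rewrite (_ : K%:Z = p%:R * c'%:R); last by rewrite /K PoszM -!natz.
  rewrite canc; apply: mdivD; apply: mdivZ.
    rewrite (_ : d = p%:Z * (p%:Z) ^+ (e.+2)); last by rewrite /d exprS.
    rewrite tE -exprD -natz; apply: dvdz_mul; first by rewrite !natz dvdzE !absz_nat.
    by apply: dvdz_exp2l; lia.
  by rewrite /d tE -!exprD; apply: dvdz_exp2l; lia.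
set P := X ^+ K in H HPw; set kt := K%:Z * t in HPw *.
have X1 : X - 1 = t *: A by rewrite /X addrC addKr.
have Y1 : Y - 1 = t *: B by rewrite /Y addrC addKr.
have c1 : mdiv d (X * Y * P - (X * Y + kt *: A)).
  rewrite (telesc _ (X * Y * (1 + kt *: A))); apply: mdivD.
    by rewrite -mulrBr; apply: mdivMl.
  rewrite mulrDr mulr1 -scalerAr opprD addrACA subrr add0r -scalerBr.
  rewrite -{2}[A]mul1r -mulrBl; apply: (@mdivZm _ t).
    rewrite (_ : kt * t = c'%:Z * (p%:Z * t * t)); last by rewrite /kt /K PoszM; ring.
    apply: dvdz_mull; rewrite tE -exprS -exprD /d; apply: dvdz_exp2l; lia.
  apply: mdivMr; rewrite (telesc _ Y) -{2}[Y]mul1r -mulrBl X1 Y1.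
  by apply: mdivD; [apply: mdivMr|]; apply: mdivZ.
have c2 : X * Y - Y * X = (t * t) *: (A * B - B * A).
  by rewrite /X /Y commE -!scalerAl -!scalerAr !scalerA -scalerBr.
set M := A * B - B * A in c2 *; clearbody M.
have Ht : mdiv d ((t * t) *: M + kt *: A).
  move: H; rewrite (telesc _ (X * Y + kt *: A)) (addrAC (X * Y) (kt *: A) (- (Y * X))) c2 => H.
  rewrite -(addKr (X * Y * P - (X * Y + kt *: A)) (_ + _)).
  by apply: mdivD => //; apply: mdivN.
move=> i j; have := Ht i j; rewrite !mxE.
have pn0 : (p%:Z) ^+ e.+2 != 0 by rewrite expf_neq0 // -lt0n prime_gt0.
rewrite (_ : d = (p%:Z) ^+ e.+2 * p%:Z); last by rewrite /d exprSr.
rewrite (_ : t * t * M i j + kt * A i j = (p%:Z) ^+ e.+2 * ((p%:Z) ^+ e * M i j + c'%:Z * A i j)).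
  by rewrite dvdz_mul2l.
by rewrite /kt /K tE PoszM !exprS; ring.
Qed.

End Mdiv.
End Helpers.
Import Helpers.

Theorem theorem1p9 (p m : nat) (c : nat -> Zpadic p) :
  prime p -> (2 < p)%N -> (2 <= m)%N ->
  (forall i : nat, (i < 2 * m)%N -> zp_coord (c i) 0 != 0%R) ->
  forall n : nat, (n < p)%N ->
  forall f : hom_G_GLn1 m n c,
  forall i : nat, (i < 2 * m)%N -> gl_trivial (proj1_sig f i).
Proof.
move=> pp p2 m2 cnz n np [X HX] /=.
have p1 : (1 < p)%N by apply: ltnW.
case: n np X HX => [|n'] np X HX.
  by move=> i _ k; apply/matrixP => [] [].
have L0 : (0 < 2 * m)%N by lia.
have nxL : forall i, (i.+1 %% (2 * m) < 2 * m)%N by move=> i; rewrite ltn_mod.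
suff H : forall e i, (i < 2 * m)%N -> gl_coord (X i) e = (1%:M)%R.
  by move=> i Hi k; apply: H.
Local Open Scope ring_scope.
elim=> [|e IH] i Hi; first exact: gl_one_mod_p.
have Pe1 : (1 < p ^ e.+1)%N by rewrite -(exp1n e.+1) ltn_exp2r.
have Pe2 : (1 < p ^ e.+2)%N by rewrite -(exp1n e.+2) ltn_exp2r.
have Pe3 : (1 < p ^ e.+3)%N by rewrite -(exp1n e.+3) ltn_exp2r.
pose Zc j := gl_coord (X j) e.+2.
pose A j : 'M[int]_n'.+1 := \matrix_(a, b) (((Zc j a b : nat) %/ p ^ e.+1)%N%:Z).
pose t : int := (p%:Z) ^+ e.+1.
have Hm : forall j a b, (j < 2 * m)%N -> ((Zc j a b : nat) %% p ^ e.+1 = (a == b))%N.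
  move=> j a b Hj; have := gl_chain (X j) e 2 a b p1; rewrite addn2 IH // val_one //.
have Lift : forall j, (j < 2 * m)%N -> \matrix_(a, b) ((Zc j a b : nat)%:Z) = 1 + t *: A j.
  move=> j Hj; apply/matrixP => a b; rewrite !mxE.
  rewrite {1}(divn_eq (Zc j a b) (p ^ e.+1)) Hm // PoszD PoszM PoszX -/t.
  by rewrite natz addrC mulrC.
have Rel : forall j, (j < 2 * m)%N ->
  mdiv ((p%:Z) ^+ e.+3) ((1 + t *: A j) * (1 + t *: A (j.+1 %% (2 * m))%N) *
     (1 + t *: A j) ^+ (p * zp_coord (c j) e.+2)
     - (1 + t *: A (j.+1 %% (2 * m))%N) * (1 + t *: A j)).
  move=> j Hj; have := HX j Hj e.+2 => /rel_poly R.
  rewrite -!Lift //; set M := (X in mdiv _ X); move=> a b.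
  have : map_mx (intr : int -> 'Z_(p ^ e.+3)) M = 0.
    by rewrite /M rmorphB !rmorphM rmorphXn /= !liftK R subrr.
  move/matrixP/(_ a b); rewrite !mxE => /eqP.
  by rewrite intZp // PoszX.
have Fp0 : forall z : int, ((z%:~R : 'F_p) == 0) = (p%:Z %| z)%Z.
  by move=> z; rewrite intZp ?pdiv_id.
pose a j := map_mx (intr : int -> 'F_p) (A j).
pose g j : 'F_p := ((zp_coord (c j) e.+2 : nat)%:Z)%:~R.
pose eps : 'F_p := ((p%:Z) ^+ e)%:~R.
have Fr : forall j, (j < 2 * m)%N ->
    eps *: (a j * a (j.+1 %% (2 * m))%N - a (j.+1 %% (2 * m))%N * a j) + g j *: a j = 0.
  move=> j Hj; have K := key_int pp p2 (Rel j Hj).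
  set E := (X in mdiv _ X) in K.
  have : map_mx (intr : int -> 'F_p) E = 0.
    apply/matrixP => a' b'; rewrite mxE [RHS]mxE; apply/eqP; rewrite Fp0; exact: K.
  by rewrite /E rmorphD /= !map_mxZ rmorphB !rmorphM.
have gnz : forall j, (j < 2 * m)%N -> g j != 0.
  move=> j Hj; rewrite Fp0 dvdzE /=.
  have E := zp_chain (c j) 0 e.+2 p1; rewrite add0n in E.
  have E' : (zp_coord (c j) e.+2 %% p)%N = zp_coord (c j) 0 by rewrite -E expn1.
  rewrite /dvdn E'.
  by apply: contra (cnz j Hj) => /eqP H; apply/eqP/val_inj.
have Hk : forall k, (0 < k <= n'.+1)%N -> k%:R != 0 :> 'F_p.
  move=> k Hk; rewrite (_ : k%:R = ((k%:Z)%:~R : 'F_p)) // Fp0 dvdzE /=.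
  by apply/negP => /dvdn_leq; lia.
have a0 : a i = 0.
  apply: (pair_zero Hk (gnz _ Hi) (gnz _ (nxL i)) (Fr _ Hi) (Fr _ (nxL i))).
apply/matrixP => a' b'; apply: val_inj => /=; rewrite val_one //.
rewrite -(gl_chain (X i) e.+1 1 a' b' p1) addn1 -/(Zc i).
have pA : (p %| (Zc i a' b' : nat) %/ p ^ e.+1)%N.
  move/matrixP: a0 => /(_ a' b'); rewrite /a !mxE => /eqP.
  by rewrite Fp0 dvdzE.
case/dvdnP: pA => q Hq.
rewrite (divn_eq (Zc i a' b') (p ^ e.+1)) Hm // Hq -mulnA -expnS modnMDl modn_small //.
by case: (a' == b'); lia.
Qed.
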